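(* Let $\phi:\mathcal{E}\to\mathcal{F}$ be a morphism of tropical vector bundles over a tropical cycle $X$. Then the function $\mathrm{rank}(\phi):|X|\to\mathbb{Z}$, $p\mapsto\mathrm{troprank}(\phi_p)$, is well defined (independent of the local trivialization used to define $\phi_p$) and locally constant.
   Context: $\mathbb{T}=\mathbb{R}\cup\{-\infty\}$ with $\oplus=\max$, $\odot=+$; $G(r\times s)$ are $r\times s$ tropical matrices with at most one finite entry per row, $G(r)$ the $r\times r$ ones with exactly one finite entry per row and column. Tropical vector bundles over a tropical cycle $X$ are given by local trivializations $\Phi_i:\pi^{-1}(U_i)\to U_i\times\mathbb{R}^r$ with transition maps $U_i\cap U_j\to G(r)$ (entries regular invertible or constantly $-\infty$), acting via $f_M(a)=M\odot a$ with $-\infty$ entries replaced by $0$. A morphism $\phi:\mathcal{E}\to\mathcal{F}$ of bundles of ranks $e,f$ commutes with projections and on a common local trivialization $U$ is given by $(x,a)\mapsto(x,f_{A(x)}(a))$ for $A:U\to G(f\times e)$ with entries regular invertible or constantly $-\infty$; the stalk map $\phi_p:\mathbb{T}^e\to\mathbb{T}^f$ is the tropical linear map with matrix $A(p)$. The tropical rank: $\mathrm{troprank}(A)=k$ iff all $(k+1)\times(k+1)$ minors (tropical determinants $\bigoplus_\sigma\bigodot_i a_{i\sigma(i)}$ of square submatrices) equal $-\infty$ and some $k\times k$ minor does not. $|X|$ denotes the support of $X$. *)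

(* Defs.v *)
From HB Require Import structures.
From mathcomp Require Import all_boot all_order all_fingroup all_algebra.
From mathcomp Require Import all_classical all_reals all_analysis.
From mathcomp Require Import Rstruct Rstruct_topology.
From Stdlib Require Import Rdefinitions.

Set Implicit Arguments.
Unset Strict Implicit.
Unset Printing Implicit Defensive.

Import Order.TTheory GRing.Theory Num.Theory.
Local Open Scope classical_set_scope.
Local Open Scope ring_scope.

Notation RR := Rdefinitions.R.

(* [None] encodes -oo, [Some x] the finite value x. *)
Definition trop := option RR.
Definition minf : trop := None.

Definition tadd (a b : trop) : trop :=
  match a, b with
  | Some x, Some y => Some (Num.max x y)
  | None, _ => b
  | _, None => a
  end.

Definition tmul (a b : trop) : trop :=
  match a, b with
  | Some x, Some y => Some (x + y)
  | _, _ => None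
  end.

Definition tdet k (A : 'M[trop]_k) : trop :=
  \big[tadd/minf]_(s : 'S_k) \big[tmul/Some 0]_(i < k) A i (s i).

Definition has_finite_minor m n (A : 'M[trop]_(m, n)) (k : nat) : Prop :=
  exists (f : 'I_k -> 'I_m) (g : 'I_k -> 'I_n),
    injective f /\ injective g /\ tdet (mxsub f g A) <> minf.

Definition is_troprank m n (A : 'M[trop]_(m, n)) (k : nat) : Prop :=
  ~ has_finite_minor A k.+1 /\ has_finite_minor A k.

Definition in_Gmn m n (A : 'M[trop]_(m, n)) : Prop :=
  forall i (j j' : 'I_n), A i j <> minf -> A i j' <> minf -> j = j'.

Definition in_Gr r (A : 'M[trop]_r) : Prop :=
  (forall i, exists! j, A i j <> minf) /\ (forall j, exists! i, A i j <> minf).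

(* f_M(a) = M (.) a, with -oo entries replaced by 0 *)
Definition fin0 (x : trop) : RR := if x is Some y then y else 0.
Definition fM m n (M : 'M[trop]_(m, n)) (a : 'rV[RR]_n) : 'rV[RR]_m :=
  \row_(i < m) fin0 (\big[tadd/minf]_(j < n) tmul (M i j) (Some (a 0 j))).

Definition reg_entries (T : topologicalType) (reg : set T -> (T -> RR) -> Prop)
    m n (U : set T) (A : T -> 'M[trop]_(m, n)) : Prop :=
  forall i j,
    (forall x, U x -> A x i j = minf) \/
    (exists g : T -> RR, reg U g /\ forall x, U x -> A x i j = Some (g x)).

Record trop_bundle (T : topologicalType) (reg : set T -> (T -> RR) -> Prop)
    (r : nat) := TropBundle {
  tot : topologicalType;
  proj : tot -> T;
  idx : Type;
  chart_dom : idx -> set T;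
  triv : idx -> tot -> T * 'rV[RR]_r;
  triv_inv : idx -> T * 'rV[RR]_r -> tot;
  trans : idx -> idx -> T -> 'M[trop]_r;
  proj_cont : continuous proj;
  chart_open : forall i, open (chart_dom i);
  chart_cover : forall p : T, exists i, chart_dom i p;
  (* Phi_i : pi^{-1}(U_i) -> U_i x R^r is a homeomorphism over U_i *)
  triv_cont : forall i, {within proj @^-1` chart_dom i, continuous (triv i)};
  triv_inv_cont : forall i,
    {within chart_dom i `*` setT, continuous (triv_inv i)};
  triv_fst : forall i e, chart_dom i (proj e) -> (triv i e).1 = proj e;
  triv_inv_proj : forall i x a, chart_dom i x -> proj (triv_inv i (x, a)) = x;
  triv_invK : forall i e, chart_dom i (proj e) -> triv_inv i (triv i e) = e;
  trivK : forall i x a, chart_dom i x -> triv i (triv_inv i (x, a)) = (x, a);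
  trans_G : forall i j x, chart_dom i x -> chart_dom j x -> in_Gr (trans i j x);
  trans_reg : forall i j,
    reg_entries reg (chart_dom i `&` chart_dom j) (trans i j);
  trans_act : forall i j x a, chart_dom i x -> chart_dom j x ->
    triv i (triv_inv j (x, a)) = (x, fM (trans i j x) a)
}.

Definition morph_chart (T : topologicalType) (reg : set T -> (T -> RR) -> Prop)
    e f (E : trop_bundle reg e) (F : trop_bundle reg f)
    (phi : tot E -> tot F)
    (i : idx E) (j : idx F) (U : set T) (A : T -> 'M[trop]_(f, e)) : Prop :=
  [/\ open U,
      U `<=` chart_dom i `&` chart_dom j,
      (forall x, U x -> in_Gmn (A x)),
      reg_entries reg U A &
      (forall x a, U x -> triv j (phi (triv_inv i (x, a))) = (x, fM (A x) a))].

Definition is_bundle_morphism (T : topologicalType)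
    (reg : set T -> (T -> RR) -> Prop)
    e f (E : trop_bundle reg e) (F : trop_bundle reg f)
    (phi : tot E -> tot F) : Prop :=
  (forall v, proj (phi v) = proj v) /\
  (forall p : T, exists i j U A, morph_chart phi i j U A /\ U p).

(* Main.v *)
Require Import Defs.
From HB Require Import structures.
From mathcomp Require Import all_boot all_order all_fingroup all_algebra.
From mathcomp Require Import all_classical all_reals all_analysis.
From mathcomp Require Import Rstruct Rstruct_topology.
From mathcomp Require Import zify.

Set Implicit Arguments.
Unset Strict Implicit.
Unset Printing Implicit Defensive.
Import Order.TTheory GRing.Theory Num.Theory.
Local Open Scope classical_set_scope.

Lemma taddA : associative tadd.
Proof. by move=> [x|] [y|] [z|] //=; rewrite maxA. Qed.
Lemma taddC : commutative tadd.
Proof. by move=> [x|] [y|] //=; rewrite maxC. Qed.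
Lemma tadd0 : left_id minf tadd.
Proof. by case. Qed.
HB.instance Definition _ := Monoid.isComLaw.Build trop minf tadd taddA taddC tadd0.

Lemma tmulA : associative tmul.
Proof. by move=> [x|] [y|] [z|] //=; rewrite addrA. Qed.
Lemma tmulC : commutative tmul.
Proof. by move=> [x|] [y|] //=; rewrite addrC. Qed.
Lemma tmul1 : left_id (Some 0%R) tmul.
Proof. by move=> [x|] //=; rewrite add0r. Qed.
HB.instance Definition _ := Monoid.isComLaw.Build trop (Some 0%R) tmul tmulA tmulC tmul1.

Definition hfm' m n (A : 'M[trop]_(m, n)) (k : nat) : Prop :=
  exists (f : 'I_k -> 'I_m) (g : 'I_k -> 'I_n),
    injective f /\ injective g /\ forall l, A (f l) (g l) <> minf.

Lemma tdet_ne k (M : 'M[trop]_k) :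
  tdet M <> minf <-> exists s : 'S_k, forall i, M i (s i) <> minf.
Proof.
split.
- move=> H; apply: contrapT => H'; apply: H; rewrite /tdet big1 // => s _.
  have [i Hi] : exists i, M i (s i) = minf.
    apply: contrapT => H2; apply: H'; exists s => i Hi; apply: H2; by exists i.
  by rewrite (bigD1 i) //= Hi.
- move=> [s Hs]; rewrite /tdet (bigD1 s) //=.
  have : \big[tmul/Some 0%R]_(i < k) M i (s i) <> minf.
    elim/big_ind: _ => //.
    by move=> [x|] [y|].
  by case: (\big[tmul/Some 0%R]_(i < k) M i (s i)) => // x _; case: (\big[tadd/minf]_(i | i != s) _).
Qed.

Lemma hfmE m n (A : 'M[trop]_(m, n)) k : has_finite_minor A k <-> hfm' A k.
Proof.
split.
- move=> [f [g [fi [gi H]]]]; move/tdet_ne: H => [s Hs].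
  exists f, (g \o s); split => //; split; first by apply: inj_comp => //; apply: perm_inj.
  by move=> l; have := Hs l; rewrite mxE.
- move=> [f [g [fi [gi H]]]]; exists f, g; split => //; split => //.
  apply/tdet_ne; exists 1%g => i; rewrite mxE perm1; exact: H.
Qed.

Lemma hfm'0 m n (A : 'M[trop]_(m, n)) : hfm' A 0.
Proof.
have f : 'I_0 -> 'I_m by case=> ?; rewrite ltn0.
have g : 'I_0 -> 'I_n by case=> ?; rewrite ltn0.
by exists f, g; split; [|split]; move=> [x hx]; have := hx; rewrite ltn0.
Qed.

Lemma hfm'_bound m n (A : 'M[trop]_(m, n)) k : hfm' A k -> (k <= m)%N.
Proof. by move=> [f [_ [fi _]]]; have := leq_card _ fi; rewrite !card_ord. Qed.

Lemma hfm'_down m n (A : 'M[trop]_(m, n)) k N : hfm' A N -> (k <= N)%N -> hfm' A k.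
Proof.
move=> [f [g [fi [gi H]]]] kN.
exists (f \o widen_ord kN), (g \o widen_ord kN); split; [|split].
- by move=> x y /fi /(congr1 val) /= /val_inj.
- by move=> x y /gi /(congr1 val) /= /val_inj.
- by move=> l; apply: H.
Qed.

Lemma troprankE m n (A : 'M[trop]_(m, n)) k :
  is_troprank A k <-> (~ hfm' A k.+1 /\ hfm' A k).
Proof. by rewrite /is_troprank !hfmE. Qed.

Lemma troprank_ex m n (A : 'M[trop]_(m, n)) : exists k, is_troprank A k.
Proof.
suff: forall d k0, (m - k0 <= d)%N -> hfm' A k0 -> exists k, is_troprank A k.
  by move=> /(_ m 0%N); apply => //; [rewrite subn0 | apply: hfm'0].
elim=> [|d IH] k0 hd hk; case: (pselect (hfm' A k0.+1)) => h;
  try by exists k0; apply/troprankE.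
- have := hfm'_bound h; lia.
- apply: (IH k0.+1) => //; have := hfm'_bound h; lia.
Qed.

Lemma troprank_uniq m n (A : 'M[trop]_(m, n)) k k' :
  is_troprank A k -> is_troprank A k' -> k = k'.
Proof.
move=> /troprankE [h1 h2] /troprankE [h1' h2'].
case: (ltngtP k k') => // H.
- by case: h1; apply: hfm'_down h2' _.
- by case: h1'; apply: hfm'_down h2 _.
Qed.

Lemma hfm'_transfer m n m' n' (A : 'M[trop]_(m, n)) (B : 'M[trop]_(m', n'))
  (s : 'I_m -> 'I_m') (t : 'I_n -> 'I_n') k :
  injective s -> injective t ->
  (forall i j, A i j <> minf -> B (s i) (t j) <> minf) -> hfm' A k -> hfm' B k.
Proof.
move=> si ti H [f [g [fi [gi Hf]]]].
exists (s \o f), (t \o g); split; [|split]; try by apply: inj_comp.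
by move=> l; apply: H.
Qed.

Local Open Scope ring_scope.

Lemma fM_agree m n (M : 'M[trop]_(m, n)) i (a b : 'rV[RR]_n) :
  (forall j, M i j <> minf -> a 0 j = b 0 j) -> fM M a 0 i = fM M b 0 i.
Proof.
move=> H; rewrite /fM !mxE; congr fin0; apply: eq_bigr => j _.
by case E: (M i j) => [c|] //=; rewrite (H j) // E.
Qed.

Lemma fM_row m n (M : 'M[trop]_(m, n)) i j c (a : 'rV[RR]_n) :
  in_Gmn M -> M i j = Some c -> fM M a 0 i = (c + a 0 j)%R.
Proof.
move=> G E; rewrite /fM !mxE (bigD1 j) //= big1 ?E //=.
move=> j' nj; case E': (M i j') => [c'|] //.
by move/eqP: nj; case; apply: (G i); rewrite ?E ?E'.
Qed.

Lemma key_entry m n (A A' : 'M[trop]_(m, n)) (tE : 'M[trop]_n) (tF : 'M[trop]_m) :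
  in_Gmn A' -> (forall a, fM A' a = fM tF (fM A (fM tE a))) ->
  forall i j, A' i j <> minf ->
  exists j' j1, [/\ tF i j' <> minf, A j' j1 <> minf & tE j1 j <> minf].
Proof.
move=> G Hid i j Hij; apply: contrapT => H.
case E: (A' i j) Hij => [c|] // _.
pose a : 'rV[RR]_n := 0%R.
pose b : 'rV[RR]_n := \row_l (if l == j then 1%R else 0%R).
have : fM A' a 0 i = fM A' b 0 i.
  rewrite !Hid; apply: fM_agree => j' Fj'; apply: fM_agree => j1 Aj1.
  apply: fM_agree => l El; rewrite !mxE; case: eqP => // el; subst l.
  by exfalso; apply: H; exists j', j1.
rewrite (fM_row a G E) (fM_row b G E) !mxE eqxx => /addrI /eqP.
by rewrite eq_sym oner_eq0.
Qed.

Lemma key m n (A A' : 'M[trop]_(m, n)) (tE : 'M[trop]_n) (tF : 'M[trop]_m) k :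
  in_Gmn A' -> in_Gr tE -> in_Gr tF ->
  (forall a, fM A' a = fM tF (fM A (fM tE a))) -> hfm' A' k -> hfm' A k.
Proof.
move=> G [E1 E2] [F1 F2] Hid [f [g [fi [gi Hf]]]].
have H l := key_entry G Hid (Hf l).
have [J' HJ'] := choice H.
have H2 l : exists j1, A (J' l) j1 <> minf /\ tE j1 (g l) <> minf.
  by have [j1 [_ ? ?]] := HJ' l; exists j1.
have [J1 HJ1] := choice H2.
exists J', J1; split; [|split].
- move=> l l' e; apply: fi.
  have [i0 [_ u]] := F2 (J' l).
  have [j1 [h1 _ _]] := HJ' l; have [j1' [h1' _ _]] := HJ' l'.
  rewrite -e in h1'.
  by rewrite -(u _ h1) (u _ h1').
- move=> l l' e; apply: gi.
  have [_ h1] := HJ1 l; have [_ h1'] := HJ1 l'.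
  have [j0 [_ u]] := E1 (J1 l).
  by rewrite -(u _ h1) (u (g l')) // e.
- by move=> l; have [] := HJ1 l.
Qed.

Lemma compose (T : topologicalType) (reg : set T -> (T -> RR) -> Prop)
    (e f : nat) (E : trop_bundle reg e) (F : trop_bundle reg f)
    (phi : tot E -> tot F) (Hproj : forall v, Defs.proj (phi v) = Defs.proj v)
    i j U A i' j' U' A' x :
  morph_chart phi i j U A -> morph_chart phi i' j' U' A' -> U x -> U' x ->
  forall a, fM (A' x) a = fM (trans j' j x) (fM (A x) (fM (trans i i' x) a)).
Proof.
move=> [_ sU _ _ HU] [_ sU' _ _ HU'] Ux U'x a.
have [hi hj] := sU x Ux; have [hi' hj'] := sU' x U'x.
have e1 : triv_inv i' (x, a) = triv_inv i (x, fM (trans i i' x) a).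
  rewrite -(trans_act a hi hi') triv_invK // triv_inv_proj //.
set b := fM (trans i i' x) a.
have e2 : phi (triv_inv i (x, b)) = triv_inv j (x, fM (A x) b).
  by rewrite -(HU x b Ux) triv_invK // Hproj triv_inv_proj.
have := HU' x a U'x; rewrite e1 e2 trans_act // => -[].
by move=> ->.
Qed.

Theorem mainTheorem4 (T : topologicalType) (reg : set T -> (T -> RR) -> Prop)
    (e f : nat) (E : trop_bundle reg e) (F : trop_bundle reg f)
    (phi : tot E -> tot F) :
  is_bundle_morphism phi ->
  exists rk : T -> nat,
    (forall (p : T) (i : idx E) (j : idx F) (U : set T)
            (A : T -> 'M[trop]_(f, e)),
        morph_chart phi i j U A -> U p -> is_troprank (A p) (rk p)) /\
    (forall p : T, exists V : set T, [/\ open V, V p &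
        forall q, V q -> rk q = rk p]).
Proof.
move=> [Hproj Hch].
have Hex p : exists k, exists i j U A, [/\ morph_chart phi i j U A, U p &
    is_troprank (A p) k].
  have [i [j [U [A [HA Up]]]]] := Hch p.
  have [k Hk] := troprank_ex (A p).
  by exists k, i, j, U, A.
have [rk Hrk] := choice Hex.
have WD : forall (p : T) (i : idx E) (j : idx F) (U : set T)
            (A : T -> 'M[trop]_(f, e)),
        morph_chart phi i j U A -> U p -> is_troprank (A p) (rk p).
  move=> p i' j' U' A' HA' U'p.
  have [i [j [U [A [HA Up Hk]]]]] := Hrk p.
  have G : in_Gmn (A p) by case: HA => _ _ GG _ _; apply: GG.
  have G' : in_Gmn (A' p) by case: HA' => _ _ GG _ _; apply: GG.
  have [hi hj] : chart_dom i p /\ chart_dom j p by case: HA => _ s _ _ _; apply: s.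
  have [hi' hj'] : chart_dom i' p /\ chart_dom j' p by case: HA' => _ s _ _ _; apply: s.
  have eq1 := compose Hproj HA HA' Up U'p.
  have eq2 := compose Hproj HA' HA U'p Up.
  have iff k : hfm' (A p) k <-> hfm' (A' p) k.
    split.
      exact: (key G (trans_G hi' hi) (trans_G hj hj') eq2).
    exact: (key G' (trans_G hi hi') (trans_G hj' hj) eq1).
  move/troprankE: Hk => [h1 h2]; apply/troprankE; rewrite -!iff; done.
exists rk; split; first exact: WD.
move=> p.
have [i [j [U [A [HA Up]]]]] := Hch p.
exists U; split => //; first by case: HA.
move=> q Uq.
have hq := WD _ _ _ _ _ HA Uq; have hp := WD _ _ _ _ _ HA Up.
have pat : forall a b, U a -> U b -> forall i j, A a i j <> minf -> A b i j <> minf.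
  move=> a b Ua Ub i0 j0; case: HA => _ _ _ R _.
  case: (R i0 j0) => [h|[g [_ h]]]; first by rewrite h.
  by rewrite (h b Ub).
apply: (troprank_uniq hq).
move/troprankE: hp => [h1 h2]; apply/troprankE; split.
- move=> h; apply: h1; apply: (hfm'_transfer (s := id) (t := id)) h => //.
  exact: pat.
- apply: (hfm'_transfer (s := id) (t := id)) h2 => //; exact: pat.
Qed.
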